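(* Let $A=[A_1,\ldots,A_n]$ be an $n\times n\times n$ ASHM such that $L(A)=1A_1+2A_2+\cdots+nA_n$ is a latin square (each of $1,\ldots,n$ appears exactly once in every row and every column). Then $A$ is a permutation hypermatrix.
   Context: An $n\times n$ alternating sign matrix (ASM) is an $n\times n$ matrix with entries in $\{0,1,-1\}$ such that in every row and column the nonzeros alternate in sign, beginning and ending with $+1$. An $n\times n\times n$ hypermatrix $A=[a_{ijk}]$ is written $A=[A_1,\ldots,A_n]$ with $A_k=[a_{ijk}]_{i,j}$. Its lines are obtained by fixing two of the three indices. $A$ is an alternating sign hypermatrix (ASHM) if all entries lie in $\{0,\pm1\}$ and in every line the nonzeros alternate in sign beginning and ending with $+1$. A permutation hypermatrix is a $(0,1)$-hypermatrix with exactly one $1$ in each line. *)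

(* Defs.v *)
From HB Require Import structures.
From mathcomp Require Import all_boot all_order all_algebra.
Set Implicit Arguments. Unset Strict Implicit. Unset Printing Implicit Defensive.
Import Order.TTheory GRing.Theory Num.Theory.
Local Open Scope ring_scope.

(* An n x n x n hypermatrix with integer entries: A i j k = a_{ijk},
   indices 0..n-1 (i.e. 'I_n) standing for 1..n. *)
Definition hypermatrix (n : nat) := 'I_n -> 'I_n -> 'I_n -> int.

Definition sign_entry (x : int) : bool := [|| x == 0, x == 1 | x == -1].

(* A line (finite sequence) whose nonzeros alternate in sign, beginning and
   ending with +1: the subsequence of nonzero entries is 1, -1, 1, ..., 1
   (nonempty, of odd length). *)
Definition alt_sign_line (s : seq int) : bool :=
  let nz := [seq x <- s | x != 0] in
  all sign_entry s &&
  [&& odd (size nz) &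
      nz == [seq ((-1) ^+ m : int) | m <- iota 0 (size nz)]].

Definition line1 n (A : hypermatrix n) (j k : 'I_n) : seq int :=
  [seq A i j k | i <- enum 'I_n].
Definition line2 n (A : hypermatrix n) (i k : 'I_n) : seq int :=
  [seq A i j k | j <- enum 'I_n].
Definition line3 n (A : hypermatrix n) (i j : 'I_n) : seq int :=
  [seq A i j k | k <- enum 'I_n].

Definition all_lines n (A : hypermatrix n) (P : seq int -> bool) : Prop :=
  (forall j k, P (line1 A j k)) /\
  (forall i k, P (line2 A i k)) /\
  (forall i j, P (line3 A i j)).

Definition is_ASHM n (A : hypermatrix n) : Prop :=
  (forall i j k, sign_entry (A i j k)) /\ all_lines A alt_sign_line.

Definition is_perm_hypermatrix n (A : hypermatrix n) : Prop :=
  (forall i j k, (A i j k == 0) || (A i j k == 1)) /\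
  all_lines A (fun s => count (pred1 1) s == 1%N).

(* L(A) = 1 A_1 + 2 A_2 + ... + n A_n, where A_k = [a_{ijk}]_{i,j}. *)
Definition Lmat n (A : hypermatrix n) : 'M[int]_n :=
  \matrix_(i, j) \sum_(k < n) (k.+1%:R : int) * A i j k.

Definition is_latin n (L : 'M[int]_n) : Prop :=
  (forall (i : 'I_n) (v : nat), (1 <= v <= n)%N ->
     #|[set j : 'I_n | L i j == v%:R]| = 1%N) /\
  (forall (j : 'I_n) (v : nat), (1 <= v <= n)%N ->
     #|[set i : 'I_n | L i j == v%:R]| = 1%N).

(* Main.v *)
Require Import Defs.
From HB Require Import structures.
From mathcomp Require Import all_boot all_order all_algebra.
From mathcomp Require Import zify ring lra.
Set Implicit Arguments. Unset Strict Implicit. Unset Printing Implicit Defensive.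
Import Order.TTheory GRing.Theory Num.Theory.
Local Open Scope ring_scope.

Lemma count_enum_card (T : finType) (a : pred T) :
  count a (enum T) = #|[set x | a x]|.
Proof. by rewrite -sum1_count -sum1dep_card big_enum_cond. Qed.

Lemma sum_bool_card (T : finType) (a : pred T) :
  (\sum_(x : T) (a x : nat))%N = #|[set x | a x]|.
Proof.
rewrite -sum1dep_card [RHS]big_mkcond /=; apply: eq_bigr => x _; by case: (a x).
Qed.

Lemma sum_eq_succ (l m : nat) : (0 < l)%N ->
  (\sum_(v < m) (l == v.+1 : nat))%N = (l <= m)%N.
Proof.
move=> l0; elim: m => [|m IH]; first by rewrite big_ord0; case: l l0.
rewrite big_ord_recr /= IH.
by case: eqP => H; case: leqP => H1; case: leqP => H2 /=; lia.
Qed.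

Lemma alt_gen (s : seq int) (c : int) : c * c = 1 ->
  [seq x <- s | x != 0] = [seq c * (-1)^+m | m <- iota 0 (size [seq x <- s | x != 0])] ->
  (forall m, 0 <= c * \sum_(x <- take m s) x <= 1) /\
  c * \sum_(x <- s) x = (odd (size [seq x <- s | x != 0]))%:R.
Proof.
elim: s c => [|x s IH] c cc /=.
  by move=> _; rewrite big_nil mulr0 lexx ler01; split.
have [->|x0] := eqVneq x 0; rewrite /=.
  move=> /(IH c cc) [H1 H2]; split; last by rewrite big_cons add0r.
  by case=> [|m] /=; rewrite ?big_nil ?mulr0 ?lexx ?ler01 // big_cons add0r.
move=> [xc H].
have ccn : (- c) * (- c) = 1 by rewrite mulrNN.
have E : [seq (c * (-1) ^+ m) | m <- iota 1 (size [seq x <- s | x != 0])] =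
   [seq (- c) * (-1)^+m | m <- iota 0 (size [seq x <- s | x != 0])].
  rewrite -[1%N]/(1 + 0)%N iotaDl -map_comp.
  by apply: eq_map => m /=; rewrite add1n exprS; ring.
rewrite E in H.
have [H1 H2] := IH (- c) ccn H.
rewrite xc expr0 mulr1; split.
  case=> [|m] /=; first by rewrite big_nil mulr0 lexx ler01.
  rewrite big_cons mulrDr cc; move: (H1 m); rewrite mulNr.
  move: (c * _) => u; lia.
rewrite big_cons mulrDr cc; move: H2; rewrite mulNr.
move: (c * _) => u. case: (odd _) => /= h; lia.
Qed.

Lemma abel (f : nat -> int) (N : nat) :
  \sum_(k < N.+1) (k.+1)%:R * f k =
  (N.+1)%:R * (\sum_(0 <= k < N.+1) f k) - \sum_(0 <= m < N) \sum_(0 <= k < m.+1) f k.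
Proof.
elim: N => [|N IH].
  by rewrite big_ord_recr big_ord0 big_nat1 big_geq //= add0r subr0.
rewrite big_ord_recr /= IH.
have E1 : \sum_(0 <= k < N.+2) f k = \sum_(0 <= k < N.+1) f k + f N.+1 by rewrite big_nat_recr.
have E2 : \sum_(0 <= m < N.+1) \sum_(0 <= k < m.+1) f k =
  \sum_(0 <= m < N) \sum_(0 <= k < m.+1) f k + \sum_(0 <= k < N.+1) f k by rewrite big_nat_recr.
rewrite E1 E2.
move: (\sum_(0 <= k < N.+1) f k) (\sum_(0 <= m < N) \sum_(0 <= k < m.+1) f k) => a b.
rewrite !mulrSr. ring.

Qed.

Lemma alt_line (s : seq int) : alt_sign_line s ->
  (forall m, 0 <= \sum_(x <- take m s) x <= 1) /\ \sum_(x <- s) x = 1.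
Proof.
case/and3P => _ od /eqP E.
have := @alt_gen s 1 (mulr1 1).
case.
  by rewrite {1}E; apply: eq_map => m; rewrite mul1r.
move=> H1 H2; split; first by move=> m; move: (H1 m); rewrite mul1r.
by move: H2; rewrite mul1r od.
Qed.

Lemma countup (l k : nat) : (0 < l)%N ->
  \sum_(0 <= m < k) (if (l <= m.+1)%N then 1 else 0 : int) = (k - l.-1)%:R.
Proof.
move=> l0; elim: k => [|k IH]; first by rewrite big_geq.
rewrite big_nat_recr //= IH !natz.
case: leqP => h; lia.
Qed.

Theorem mainTheorem4 (n : nat) (A : hypermatrix n) :
  is_ASHM A -> is_latin (Lmat A) -> is_perm_hypermatrix A.
Proof.
case: n A => [|n] A.
  move=> _ _; split; first by case.
  by split; [case | split; case].
move=> [hsg [h1 [h2 h3]]] [lr lc].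
pose f i j k := A i j (inord k).
pose P i j m := \sum_(0 <= k < m.+1) f i j k.
have line3E i j : line3 A i j = [seq f i j k | k <- iota 0 n.+1].
  by rewrite /line3 -val_enum_ord -map_comp; apply: eq_map => k /=; rewrite /f inord_val.
have Pb i j m : (m <= n)%N -> 0 <= P i j m <= 1.
  move=> hm; have [H _] := alt_line (h3 i j).
  move: (H m.+1); rewrite line3E -map_take take_iota big_map.
  by rewrite (minn_idPl _) // /P /index_iota subn0.
have PL i j : P i j n = 1.
  have [_ H] := alt_line (h3 i j).
  by move: H; rewrite line3E big_map /P /index_iota subn0.
have row1 i k : \sum_(j < n.+1) A i j k = 1.
  have [_ H] := alt_line (h2 i k).
  by move: H; rewrite /line2 big_map big_enum.
have LF i j : Lmat A i j = (n.+1)%:R - \sum_(0 <= m < n) P i j m.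
  rewrite mxE.
  rewrite (eq_bigr (fun k : 'I_n.+1 => (k.+1)%:R * f i j k)); last by move=> k _; rewrite /f inord_val.
  by rewrite abel -/(P i j n) PL mulr1.
have Lb i j : 1 <= Lmat A i j <= (n.+1)%:R.
  rewrite LF.
  have s0 : 0 <= \sum_(0 <= m < n) P i j m.
    rewrite big_nat_cond; apply: sumr_ge0 => m /andP[/andP[_ hm] _].
    by have /andP[] := Pb i j m (ltnW hm).
  have s1 : \sum_(0 <= m < n) P i j m <= \sum_(0 <= m < n) 1.
    rewrite big_nat_cond [X in _ <= X]big_nat_cond; apply: ler_sum => m /andP[/andP[_ hm] _].
    by have /andP[] := Pb i j m (ltnW hm).
  move: s1; rewrite sumr_const_nat subn0 => s1.
  move: s0 s1; move: (\sum_(_ <= _ < _) _) => u; rewrite !natz => *; lia.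
pose lv i j := `|Lmat A i j|%N.
have Lv i j : Lmat A i j = (lv i j)%:R.
  by rewrite natz /lv gez0_abs //; have /andP[h _] := Lb i j; lia.
have lvb i j : (1 <= lv i j <= n.+1)%N.
  by have := Lb i j; rewrite Lv !natz; lia.
have LE i j v : (Lmat A i j == v%:R) = (lv i j == v).
  by rewrite Lv eqr_nat.
have cnt i m : (m <= n.+1)%N -> (\sum_(j < n.+1) (lv i j <= m : nat))%N = m.
  move=> hm.
  rewrite (eq_bigr (fun j => \sum_(v < m) (lv i j == v.+1 : nat))%N); last first.
    by move=> j _; rewrite sum_eq_succ //; case/andP: (lvb i j).
  rewrite exchange_big /=.
  rewrite (eq_bigr (fun _ => 1%N)); first by rewrite sum1_card card_ord.
  move=> v _; rewrite sum_bool_card -(lr i v.+1); last by rewrite ltnS (leq_trans (ltn_ord v)).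
  by apply: eq_card => j; rewrite !inE LE.
have main : forall k, (k <= n)%N -> forall i j,
    P i j k = if (lv i j <= k.+1)%N then 1 else 0.
  elim/ltn_ind => k IHk hk i.
  have A1 j : (lv i j <= k.+1)%N -> P i j k = 1.
    move=> hl.
    have [/andP[l1 _]] := (lvb i j, Pb i j k hk).
    case/andP => pk0 pk1.
    have [ekn|kn] := eqVneq k n; first by rewrite ekn PL.
    have kn' : (k < n)%N by rewrite ltn_neqAle kn.
    have := LF i j; rewrite Lv.
    rewrite (big_cat_nat (n := k)) //= (big_ltn kn') /=.
    rewrite (eq_big_nat _ _ (F2 := fun m => if (lv i j <= m.+1)%N then 1 else 0)); last first.
      by move=> m /andP[_ hmk]; apply: IHk => //; apply: leq_trans (ltnW hmk) hk.
    rewrite countup //.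
    have R0 : \sum_(k.+1 <= m < n) P i j m <= \sum_(k.+1 <= m < n) 1.
      rewrite big_nat_cond [X in _ <= X]big_nat_cond; apply: ler_sum => m /andP[/andP[_ hm] _].
      by have /andP[] := Pb i j m (ltnW hm).
    move: R0; rewrite sumr_const_nat; move: (\sum_(_ <= _ < _) _) => u.
    rewrite -/(P i j k) !natz => *; lia.
  pose g j := P i j k - (if (lv i j <= k.+1)%N then 1 else 0).
  have g0 j : 0 <= g j.
    rewrite /g; case: ifP => h; first by rewrite A1 // subrr.
    by rewrite subr0; have /andP[] := Pb i j k hk.
  have gs : \sum_(j < n.+1) g j = 0.
    rewrite /g sumrB.
    have -> : \sum_(j < n.+1) P i j k = (k.+1)%:R.
      rewrite /P exchange_big /=.
      rewrite (eq_bigr (fun _ => 1)); last by move=> m _; apply: row1.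
      by rewrite sumr_const_nat subn0.
    have -> : \sum_(j < n.+1) (if (lv i j <= k.+1)%N then 1 else 0 : int)
              = ((\sum_(j < n.+1) (lv i j <= k.+1 : nat))%N)%:R.
      by rewrite natr_sum; apply: eq_bigr => j _; case: ifP.
    by rewrite cnt // subrr.
  move=> j; have := @psumr_eq0P _ _ xpredT g (fun j _ => g0 j) gs j isT.
  by rewrite /g => /eqP; rewrite subr_eq0 => /eqP.
have AE i j (k : 'I_n.+1) : A i j k = if lv i j == k.+1 then 1 else 0.
  have hk : (k <= n)%N by rewrite -ltnS.
  have /andP[l1 _] := lvb i j.
  have -> : A i j k = f i j k by rewrite /f inord_val.
  case: (nat_of_ord k) hk => [|k'] hk.
    have := main 0%N (leq0n _) i j; rewrite /P big_nat1 => ->.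
    by case: eqP => h; case: leqP => h'; lia.
  have := main k'.+1 hk i j; have := main k' (ltnW hk) i j.
  rewrite /P => e1; rewrite big_nat_recr //= e1.
  case: eqP => h; case: leqP => h'; case: leqP => h''; lia.
have AE' i j k : (A i j k == 1) = (lv i j == k.+1).
  by rewrite AE; case: (lv i j == k.+1).
split.
  by move=> i j k; rewrite AE; case: (lv i j == k.+1).
split.
  move=> j k; rewrite /line1 count_map count_enum_card -(lc j k.+1); last by rewrite /= ltn_ord.
  apply/eqP.
  by apply: eq_card => i; rewrite !inE /= AE' LE.
split.
  move=> i k; rewrite /line2 count_map count_enum_card -(lr i k.+1); last by rewrite /= ltn_ord.
  apply/eqP.
  by apply: eq_card => j; rewrite !inE /= AE' LE.
move=> i j; rewrite /line3 count_map count_enum_card -sum_bool_card; apply/eqP.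
rewrite (eq_bigr (fun k : 'I_n.+1 => (lv i j == k.+1 : nat))); last by move=> k _; rewrite /= AE'.
have /andP[l1 l2] := lvb i j.
by rewrite sum_eq_succ // l2.
Qed.
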